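(* Let $X$ be a metric space, let $A\subseteq X$ be nonempty and let $Y$ be a hyperconvex metric space. Then for every $f\in\mathcal{N}(A,Y)$, the set $\Phi(f)$ of all $f'\in\mathcal{N}(X,Y)$ with $f'|_A=f$ is externally hyperconvex in $(\mathcal{N}(X,Y),d_\infty)$.
   Context: A metric space $Y$ is hyperconvex if $\bigcap_\alpha B(x_\alpha,r_\alpha)\ne\emptyset$ for every family of points $x_\alpha\in Y$ and $r_\alpha>0$ with $d(x_\alpha,x_\beta)\le r_\alpha+r_\beta$ ($B$ = closed ball). A subset $E$ of a metric space $Z$ is externally hyperconvex (with respect to $Z$) if for any family $\{x_\alpha\}\subseteq Z$ and reals $\{r_\alpha\}$ with $d(x_\alpha,x_\beta)\le r_\alpha+r_\beta$ and $\mathrm{dist}(x_\alpha,E)\le r_\alpha$ for all $\alpha,\beta$, one has $\bigcap_\alpha B(x_\alpha,r_\alpha)\cap E\ne\emptyset$. $\mathcal{N}(X,Y)$ is the set of bounded nonexpansive maps $X\to Y$ with the supremum metric $d_\infty$. *)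

(* Defs.v *)
From HB Require Import structures.
From mathcomp Require Import all_boot all_order all_algebra.
From mathcomp Require Import all_classical all_reals ereal.
Set Implicit Arguments. Unset Strict Implicit. Unset Printing Implicit Defensive.
Import Order.TTheory GRing.Theory Num.Theory.
Local Open Scope classical_set_scope.
Local Open Scope ring_scope.
Local Open Scope ereal_scope.
Local Open Scope ring_scope.

Definition is_metric (R : realType) (T : Type) (d : T -> T -> R) : Prop :=
  [/\ (forall x y, 0 <= d x y),
      (forall x y, d x y = 0 <-> x = y),
      (forall x y, d x y = d y x) &
      (forall x y z, d x z <= d x y + d y z)].

Definition cball (R : realType) (T : Type) (d : T -> T -> R) (x : T) (r : R)
  : set T := [set y | d x y <= r].

Definition hyperconvex (R : realType) (T : Type) (d : T -> T -> R) : Prop :=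
  forall (I : Type) (x : I -> T) (r : I -> R),
    (forall i, 0 < r i) ->
    (forall i j, d (x i) (x j) <= r i + r j) ->
    exists y, forall i, cball d (x i) (r i) y.

(* distance from a point to a set, in the extended reals (+oo for the empty set) *)
Definition setdist (R : realType) (T : Type) (d : T -> T -> R) (x : T) (E : set T)
  : \bar R := ereal_inf [set (d x e)%:E | e in E].

Definition ext_hyperconvex (R : realType) (Z : Type) (d : Z -> Z -> R) (E : set Z)
  : Prop :=
  forall (I : Type) (x : I -> Z) (r : I -> R),
    (forall i j, d (x i) (x j) <= r i + r j) ->
    (forall i, (setdist d (x i) E <= (r i)%:E)%E) ->
    exists2 e, E e & forall i, cball d (x i) (r i) e.

Definition nonexpansive_on (R : realType) (X Y : Type) (dX : X -> X -> R)
  (dY : Y -> Y -> R) (D : set X) (f : X -> Y) : Prop :=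
  forall a b, D a -> D b -> dY (f a) (f b) <= dX a b.

Definition bounded_on (R : realType) (X Y : Type) (dY : Y -> Y -> R)
  (D : set X) (f : X -> Y) : Prop :=
  exists M : R, forall a b, D a -> D b -> dY (f a) (f b) <= M.

(* N(D,Y): bounded nonexpansive maps on D (represented by maps X -> Y,
   only their values on D matter) *)
Definition Nmap (R : realType) (X Y : Type) (dX : X -> X -> R)
  (dY : Y -> Y -> R) (D : set X) (f : X -> Y) : Prop :=
  bounded_on dY D f /\ nonexpansive_on dX dY D f.

Definition NXY (R : realType) (X Y : Type) (dX : X -> X -> R) (dY : Y -> Y -> R)
  := {f : X -> Y | Nmap dX dY setT f}.

Definition dinf (R : realType) (X Y : Type) (dX : X -> X -> R) (dY : Y -> Y -> R)
  (f g : NXY dX dY) : R :=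
  sup [set dY (proj1_sig f x) (proj1_sig g x) | x in [set: X]].

Definition Phi (R : realType) (X Y : Type) (dX : X -> X -> R) (dY : Y -> Y -> R)
  (A : set X) (f : X -> Y) : set (NXY dX dY) :=
  [set g | forall a, A a -> proj1_sig g a = f a].

(* Main.v *)
Require Import Defs.
From HB Require Import structures.
From mathcomp Require Import all_boot all_order all_algebra.
From mathcomp Require Import all_classical all_reals ereal.
From mathcomp Require Import lra.
Import Order.TTheory GRing.Theory Num.Theory.
Local Open Scope classical_set_scope.
Local Open Scope ring_scope.

Lemma hc_nn (R : realType) (Y : Type) (dY : Y -> Y -> R) (hc : hyperconvex dY)
  (J : Type) (c : J -> Y) (r : J -> R) :
  (forall i, 0 <= r i) -> (forall i j, dY (c i) (c j) <= r i + r j) ->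
  exists y, forall i, dY (c i) y <= r i.
Proof.
move=> r0 rij.
case: (pselect (exists i, r i = 0)) => [[i0 ri0]|nz].
  by exists (c i0) => i; have := rij i i0; rewrite ri0 addr0.
have rpos : forall i, 0 < r i.
  move=> i; rewrite lt0r r0 andbT; apply/eqP => h; apply: nz; by exists i.
have [y hy] := hc J c r rpos rij.
by exists y.
Qed.

Lemma core (R : realType) (X Y : Type) (dX : X -> X -> R) (dY : Y -> Y -> R)
  (hX : is_metric dX) (hY : is_metric dY) (hc : hyperconvex dY)
  (A : set X) (f : X -> Y) (J : Type) (g : J -> X -> Y) (r : J -> R) :
  nonexpansive_on dX dY A f ->
  (forall i a b, dY (g i a) (g i b) <= dX a b) ->
  (forall i j z, dY (g i z) (g j z) <= r i + r j) ->
  (forall i a, A a -> dY (g i a) (f a) <= r i) ->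
  exists h : X -> Y, [/\ forall a, A a -> h a = f a,
     forall a b, dY (h a) (h b) <= dX a b & forall i z, dY (g i z) (h z) <= r i].
Proof.
case: hX => X0 Xeq Xsym Xtri; case: hY => Y0 Yeq Ysym Ytri.
move=> fne gne gp gA.
pose base := [set p : X * Y | A p.1 /\ p.2 = f p.1].
pose Q := fun H : set (X * Y) =>
  (forall p q, H p -> H q -> dY p.2 q.2 <= dX p.1 q.1) /\
  (forall p i, H p -> dY (g i p.1) p.2 <= r i).
have Qbase : Q base.
  split.
    move=> [a b] [c d] [Aa e1] [Ac e2]; rewrite /= in Aa e1 Ac e2 *.
    by rewrite e1 e2; exact: fne.
  move=> [a b] i [Aa e1]; rewrite /= in Aa e1 *; rewrite e1; exact: gA.
have chain : forall F : set (set (X * Y)), F `<=` (fun G => Q (G `|` base)) ->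
    total_on F subset -> Q (\bigcup_(G in F) G `|` base).
  move=> F PF tot; split.
    move=> p q [[G1 FG1 G1p]|bp] [[G2 FG2 G2q]|bq].
    - case: (tot G1 G2 FG1 FG2) => [s12|s21].
        by apply: (proj1 (PF G2 FG2)); left => //; exact: s12.
      by apply: (proj1 (PF G1 FG1)); [left|left; exact: s21].
    - by apply: (proj1 (PF G1 FG1)); [left|right].
    - by apply: (proj1 (PF G2 FG2)); [right|left].
    - exact: (proj1 Qbase).
  move=> p i [[G1 FG1 G1p]|bp].
    by apply: (proj2 (PF G1 FG1)); left.
  exact: (proj2 Qbase).
have [M [PM maxM]] := Zorn_bigcup chain.
have dom : forall x, exists y, (M `|` base) (x, y).
  move=> x; apply: contrapT => nex.
  pose c := fun k : (J + {p : X * Y | (M `|` base) p})%type =>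
    match k with inl i => g i x | inr p => (proj1_sig p).2 end.
  pose rr := fun k : (J + {p : X * Y | (M `|` base) p})%type =>
    match k with inl i => r i | inr p => dX x (proj1_sig p).1 end.
  have [y hy] : exists y, forall k, dY (c k) y <= rr k.
    apply: (@hc_nn _ _ dY hc _ c rr).
    + case=> [i|[p Hp]] /=; last exact: X0.
      have := gp i i x; rewrite (proj2 (Yeq _ _)) //; lra.
    case=> [i|[p Hp]] [j|[q Hq]] /=.
    * exact: gp.
    * apply: le_trans (Ytri _ (g i q.1) _) _; rewrite [r i + _]addrC; apply: lerD.
        exact: gne.
      exact: (proj2 PM).
    * rewrite Ysym; apply: le_trans (Ytri _ (g j p.1) _) _; apply: lerD.
        exact: gne.
      exact: (proj2 PM).
    * apply: le_trans (proj1 PM p q Hp Hq) _.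
      by apply: le_trans (Xtri _ x _) _; rewrite Xsym.
  have mem : forall p, (M `|` [set (x, y)] `|` base) p ->
      (M `|` base) p \/ p = (x, y).
    by move=> p [[Mp|->]|bp]; [left; left|right|left; right].
  apply: (maxM (M `|` [set (x, y)])).
    split; first by move=> p Mp; left.
    move=> sub; apply: nex; exists y; left; apply: sub; by right.
  split.
    move=> p q /mem [Hp|->] /mem [Hq|->].
    - exact: (proj1 PM).
    - by rewrite Xsym; exact: (hy (inr (exist _ p Hp))).
    - by rewrite Ysym; exact: (hy (inr (exist _ q Hq))).
    - by rewrite /= (proj2 (Yeq _ _)) // (proj2 (Xeq _ _)).
  move=> p i /mem [Hp|->].
    exact: (proj2 PM).
  exact: (hy (inl i)).
pose h := fun x => proj1_sig (cid (dom x)).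
have hH : forall x, (M `|` base) (x, h x) := fun x => proj2_sig (cid (dom x)).
exists h; split.
- move=> a Aa; apply/(proj1 (Yeq _ _)).
  apply/eqP; rewrite eq_le Y0 andbT.
  have := proj1 PM (a, h a) (a, f a) (hH a) (or_intror (conj Aa erefl)).
  by rewrite /= (proj2 (Xeq _ _)).
- move=> a b; exact: (proj1 PM (a, h a) (b, h b) (hH a) (hH b)).
- move=> i z; exact: (proj2 PM (z, h z) i (hH z)).
Qed.

Arguments core {R X Y dX dY} hX hY hc {A f J g r}.

Lemma dinf_ge (R : realType) (X Y : Type) (dX : X -> X -> R) (dY : Y -> Y -> R)
  (hY : is_metric dY) (x0 : X) (u v : NXY dX dY) (z : X) :
  dY (proj1_sig u z) (proj1_sig v z) <= dinf u v.
Proof.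
case: hY => Y0 Yeq Ysym Ytri.
apply: sup_upper_bound; last by exists z.
split; first by exists (dY (proj1_sig u z) (proj1_sig v z)); exists z.
case: (proj2_sig u) => [[Mu hu] _]; case: (proj2_sig v) => [[Mv hv] _].
exists (Mu + dY (proj1_sig u x0) (proj1_sig v x0) + Mv) => _ [w _ <-].
apply: le_trans (Ytri _ (proj1_sig u x0) _) _; rewrite -addrA; apply: lerD.
  exact: hu.
apply: le_trans (Ytri _ (proj1_sig v x0) _) _; apply: lerD => //.
by rewrite Ysym; exact: hv.
Qed.

Arguments dinf_ge {R X Y dX dY}.

Lemma dinf_le (R : realType) (X Y : Type) (dX : X -> X -> R) (dY : Y -> Y -> R)
  (x0 : X) (u v : NXY dX dY) (c : R) :
  (forall z, dY (proj1_sig u z) (proj1_sig v z) <= c) -> dinf u v <= c.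
Proof.
move=> hz; apply: ge_sup.
  by exists (dY (proj1_sig u x0) (proj1_sig v x0)); exists x0.
by move=> _ [z _ <-].
Qed.

Arguments dinf_le {R X Y dX dY}.

Theorem lemma5p4 (R : realType) (X Y : Type)
  (dX : X -> X -> R) (dY : Y -> Y -> R)
  (hX : is_metric dX) (hY : is_metric dY)
  (A : set X) (hA : A !=set0) (hYhc : hyperconvex dY)
  (f : X -> Y) (hf : Nmap dX dY A f) :
  ext_hyperconvex (@dinf R X Y dX dY) (@Phi R X Y dX dY A f).
Proof.
have hY' := hY.
case: hY' => Y0 Yeq Ysym Ytri.
case: hA => a0 Aa0.
move=> J x r H1 H2.
pose g := fun i => proj1_sig (x i).
have gne : forall i a b, dY (g i a) (g i b) <= dX a b.
  by move=> i a b; exact: (proj2 (proj2_sig (x i)) a b Logic.I Logic.I).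
have gp : forall i j z, dY (g i z) (g j z) <= r i + r j.
  by move=> i j z; apply: le_trans (H1 i j); exact: (dinf_ge hY a0).
have gA : forall i a, A a -> dY (g i a) (f a) <= r i.
  move=> i a Aa; have le := H2 i; rewrite /setdist in le.
  suff : ((dY (g i a) (f a))%:E <= ereal_inf
      [set (dinf (x i) e)%:E | e in Phi A f])%E.
    by move=> /le_trans /(_ le); rewrite lee_fin.
  apply: le_ereal_inf_tmp => _ [e Pe <-]; rewrite lee_fin.
  by have := dinf_ge hY a0 (x i) e a; rewrite (Pe a Aa).
case: (pselect (exists i : J, True)) => [[i0 _]|nJ].
  have [h [hA hne hr]] := core hX hY hYhc (proj2 hf) gne gp gA.
  have Nh : Nmap dX dY setT h.
    split; last by move=> a b _ _; exact: hne.
    case: (proj1 (proj2_sig (x i0))) => M0 hM0.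
    exists (r i0 + (M0 + r i0)) => a b _ _.
    apply: le_trans (Ytri _ (g i0 a) _) _; apply: lerD.
      by rewrite Ysym; exact: hr.
    apply: le_trans (Ytri _ (g i0 b) _) _; apply: lerD.
      exact: hM0.
    exact: hr.
  exists (exist _ h Nh); first exact: hA.
  by move=> i; apply: (dinf_le a0) => z; exact: hr.
case: (proj1 hf) => M hM.
have c1 : forall (i : unit) (a b : X), dY ((fun _ _ => f a0) i a) ((fun _ _ => f a0) i b) <= dX a b.
  by move=> _ a b; rewrite (proj2 (Yeq _ _)) //; case: hX.
have c2 : forall (i j : unit) (z : X), dY ((fun _ _ => f a0) i z) ((fun _ _ => f a0) j z) <= (fun _ => M) i + (fun _ => M) j.
  move=> _ _ _; rewrite (proj2 (Yeq _ _)) //.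
  by have := hM a0 a0 Aa0 Aa0; rewrite (proj2 (Yeq _ _)) //; lra.
have c3 : forall (i : unit) a, A a -> dY ((fun _ _ => f a0) i a) (f a) <= (fun _ => M) i.
  by move=> _ a Aa; exact: hM.
have [h [hA hne hr]] := core hX hY hYhc (proj2 hf) c1 c2 c3.
have Nh : Nmap dX dY setT h.
  split; last by move=> a b _ _; exact: hne.
  exists (M + M) => a b _ _.
  apply: le_trans (Ytri _ (f a0) _) _; apply: lerD.
    by rewrite Ysym; exact: (hr tt).
  exact: (hr tt).
exists (exist _ h Nh); first exact: hA.
by move=> i; exfalso; apply: nJ; exists i.
Qed.
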